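(* If a complete theory $T$ has a witness of SSOP$_1$, then $T$ has an antichain tree. More precisely, if $\langle\varphi(x,y),\langle a_\eta\rangle_{\eta\in{}^{\omega>}2}\rangle$ witnesses SSOP$_1$, then there is $\langle b_\eta\rangle_{\eta\in{}^{\omega>}2}$ such that $\langle\varphi(x,y),\langle b_\eta\rangle\rangle$ is an antichain tree.
   Context: ${}^{\omega>}2$ is the binary tree with initial-segment order $\trianglelefteq$ and concatenation $^\frown$. $\langle\varphi,\langle a_\eta\rangle\rangle$ witnesses SSOP$_1$ if for every $X\subseteq{}^{\omega>}2$, $\{\varphi(x,a_\eta):\eta\in X\}$ is consistent iff there are no $\eta,\nu\in{}^{\omega>}2$ with $\eta^\frown\langle1\rangle,\eta^\frown\langle0\rangle^\frown\nu\in X$. $\langle\varphi,\langle b_\eta\rangle\rangle$ is an antichain tree if for every $X\subseteq{}^{\omega>}2$, $\{\varphi(x,b_\eta):\eta\in X\}$ is consistent iff the elements of $X$ are pairwise $\trianglelefteq$-incomparable. *)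

(* Defs.v *)
From mathcomp Require Import all_boot.
Set Implicit Arguments. Unset Strict Implicit. Unset Printing Implicit Defensive.

Record signature := Signature {
  funs : Type; fun_ar : funs -> nat;
  rels : Type; rel_ar : rels -> nat }.

Section FOL.
Variable L : signature.

Inductive term : Type :=
| tvar : nat -> term
| tapp : forall f : funs L, ('I_(fun_ar f) -> term) -> term.

Inductive formula : Type :=
| fbot : formula
| feq  : term -> term -> formula
| frel : forall r : rels L, ('I_(rel_ar r) -> term) -> formula
| fimp : formula -> formula -> formula
| fall : nat -> formula -> formula.

Fixpoint free_term (k : nat) (t : term) : Prop :=
  match t with
  | tvar i => i = k
  | tapp f args => exists j, free_term k (args j)
  end.

Fixpoint free (k : nat) (phi : formula) : Prop :=
  match phi with
  | fbot => False
  | feq t u => free_term k t \/ free_term k u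
  | frel r args => exists j, free_term k (args j)
  | fimp p q => free k p \/ free k q
  | fall i p => i <> k /\ free k p
  end.

Definition sentence (phi : formula) : Prop := forall k, ~ free k phi.

Record structure := Structure {
  carrier :> Type;
  inhabitant : carrier;
  fun_interp : forall f : funs L, ('I_(fun_ar f) -> carrier) -> carrier;
  rel_interp : forall r : rels L, ('I_(rel_ar r) -> carrier) -> Prop }.

Fixpoint eval (M : structure) (v : nat -> M) (t : term) : M :=
  match t with
  | tvar i => v i
  | tapp f args => @fun_interp M f (fun j => eval v (args j))
  end.

Definition update (M : structure) (v : nat -> M) (i : nat) (m : M) : nat -> M :=
  fun k => if k == i then m else v k.

Fixpoint sat (M : structure) (v : nat -> M) (phi : formula) : Prop :=
  match phi with
  | fbot => False
  | feq t u => eval v t = eval v u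
  | frel r args => @rel_interp M r (fun j => eval v (args j))
  | fimp p q => sat v p -> sat v q
  | fall i p => forall m : M, sat (update v i m) p
  end.

Definition theory := formula -> Prop.

Definition models (M : structure) (T : theory) : Prop :=
  forall sigma, T sigma -> forall v : nat -> M, sat v sigma.

Definition complete_theory (T : theory) : Prop :=
  [/\ (forall sigma, T sigma -> sentence sigma),
      (exists M : structure, models M T) &
      forall sigma, sentence sigma ->
        (forall M : structure, models M T -> forall v : nat -> M, sat v sigma) \/
        (forall M : structure, models M T -> forall v : nat -> M, ~ sat v sigma)].

(* A formula phi(x,y) is given by phi together with the list ys of the
   parameter variables y; x consists of all other variables.  A parameter
   tuple a is given as an assignment a : nat -> M, only its values on ys
   matter.  The instance phi(x,a) with x realized by c is evaluated under
   the assignment combining a (on ys) and c (elsewhere). *)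
Definition inst (M : structure) (ys : seq nat) (a c : nat -> M) : nat -> M :=
  fun z => if z \in ys then a z else c z.

(* {phi(x, a_eta) : eta in X} is consistent: every finite subset is realized
   (consistency with the elementary diagram of M, by compactness). *)
Definition consistent (M : structure) (ys : seq nat) (phi : formula)
    (a : seq bool -> nat -> M) (X : seq bool -> Prop) : Prop :=
  forall F : seq (seq bool), (forall eta, eta \in F -> X eta) ->
    exists c : nat -> M, forall eta, eta \in F -> sat (inst ys (a eta) c) phi.

End FOL.

(* ---------- Trees: ^{omega>}2 = seq bool, <1> = true, <0> = false,
   initial-segment order = prefix, concatenation = ++ ---------- *)

Definition ssop1_witness (L : signature) (M : structure L) (ys : seq nat)
    (phi : formula L) (a : seq bool -> nat -> M) : Prop :=
  forall X : seq bool -> Prop,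
    consistent ys phi a X <->
    ~ (exists eta nu : seq bool,
         X (eta ++ [:: true]) /\ X (eta ++ false :: nu)).

Definition antichain_tree (L : signature) (M : structure L) (ys : seq nat)
    (phi : formula L) (b : seq bool -> nat -> M) : Prop :=
  forall X : seq bool -> Prop,
    consistent ys phi b X <->
    (forall eta nu : seq bool, X eta -> X nu -> eta != nu ->
       ~~ prefix eta nu /\ ~~ prefix nu eta).

(* Main.v *)
Require Import Defs.
From mathcomp Require Import all_boot.

Fixpoint gtr (s : seq bool) : seq bool :=
  match s with
  | [::] => [:: true]
  | b :: s' => false :: b :: gtr s'
  end.

Lemma gtr_bad_prefix (e n mu nu' : seq bool) :
  gtr e = mu ++ [:: true] -> gtr n = mu ++ false :: nu' -> prefix e n.
Proof.
elim: e n mu nu' => [|b e IH] n mu nu' /=.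
  by move=> _; rewrite prefix0s.
case: mu => [|m1 [|m2 mu']] //=.
- by case=> _ _; case: (e) => [|? ?].
- case=> <- <- He.
  case: n => [|c n] //= [<- Hn].
  by rewrite eqxx (IH n mu' nu').
Qed.

Lemma gtr_prefix_bad (e : seq bool) c r :
  exists mu nu', gtr e = mu ++ [:: true] /\ gtr (e ++ c :: r) = mu ++ false :: nu'.
Proof.
elim: e => [|b e [mu [nu' [H1 H2]]]] /=.
  by exists [::], (c :: gtr r).
by exists [:: false, b & mu], nu'; rewrite H1 H2.
Qed.

Section Transfer.
Variables (L : signature) (M : structure L) (ys : seq nat) (phi : formula L)
  (a : seq bool -> nat -> M).

Lemma cons_transfer (X : seq bool -> Prop) :
  consistent ys phi (fun e => a (gtr e)) X <->
  consistent ys phi a (fun m => exists e, X e /\ m = gtr e).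
Proof.
split.
- move=> H F HF.
  have [F0 [HF0 HF0']] : exists F0 : seq (seq bool), (forall e, e \in F0 -> X e) /\
      (forall m, m \in F -> exists2 e, e \in F0 & m = gtr e).
    elim: F HF => [|m F IH] HF.
      by exists [::].
    have HF' : forall e, e \in F -> exists e0, X e0 /\ e = gtr e0.
      by move=> e He; apply: HF; rewrite in_cons He orbT.
    have [F0 [H1 H2]] := IH HF'.
    have [e [Xe ->]] := HF m (mem_head _ _).
    exists (e :: F0); split.
      by move=> e'; rewrite in_cons => /orP [/eqP -> //|]; apply: H1.
    move=> m'; rewrite in_cons => /orP [/eqP ->|Hm'].
      by exists e; rewrite ?mem_head.
    by have [e' He' ->] := H2 _ Hm'; exists e'; rewrite // in_cons He' orbT.
  have [c Hc] := H F0 HF0.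
  exists c => m Hm; have [e He ->] := HF0' _ Hm; exact: Hc.
- move=> H F HF.
  have HF' : forall m, m \in map gtr F -> exists e, X e /\ m = gtr e.
    by move=> m /mapP [e He ->]; exists e; split => //; exact: HF.
  have [c Hc] := H (map gtr F) HF'.
  by exists c => e He; apply: Hc; rewrite map_f.
Qed.
End Transfer.

Theorem proposition5p6 (L : signature) (T : theory L)
  (hT : complete_theory T) (phi : formula L) (ys : seq nat) :
  (exists (M : structure L) (a : seq bool -> nat -> M),
      models M T /\ ssop1_witness ys phi a) ->
  exists (N : structure L) (b : seq bool -> nat -> N),
      models N T /\ antichain_tree ys phi b.
Proof.
move=> [M [a [HM Hs]]].
exists M, (fun e => a (gtr e)); split => // X.
have E1 := @cons_transfer L M ys phi a X.
have E2 := Hs (fun m => exists e, X e /\ m = gtr e).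
have noprefix : forall e n, X e -> X n -> e != n -> prefix e n ->
    exists eta nu, (exists e, X e /\ eta ++ [:: true] = gtr e) /\
                   (exists e, X e /\ eta ++ false :: nu = gtr e).
  move=> e n Xe Xn Hne /prefixP [s Hs'].
  case: s Hs' => [|c r] Hs'.
    by move: Hne; rewrite Hs' cats0 eqxx.
  have [mu [nu' [H1 H2]]] := gtr_prefix_bad e c r.
  exists mu, nu'; split; [exists e | exists n]; split => //.
  by rewrite Hs' H2.
split.
- move=> /E1 /E2 Hn e n Xe Xn Hne; split; apply/negP => Hp.
  + exact: Hn (noprefix e n Xe Xn Hne Hp).
  + by apply: Hn; apply: (noprefix n e Xn Xe _ Hp); rewrite eq_sym.
- move=> Hac; apply/E1/E2 => - [mu [nu' [[e1 [X1 H1]] [e2 [X2 H2]]]]].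
  have Hp := @gtr_bad_prefix e1 e2 mu nu' (esym H1) (esym H2).
  have Hne : e1 != e2.
    apply/eqP => E; move: H2; rewrite -E -H1 => /eqP.
    by rewrite eqseq_cat // eqxx.
  by have [/negP] := Hac e1 e2 X1 X2 Hne.
Qed.
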